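(* Let $n\ge2$ and let $\mathsf{T}$ be a string of length $n$ over $\{\mathtt{a},\mathtt{b}\}$ ($\mathtt{a}<\mathtt{b}$) whose suffix array $P=[p_1,\ldots,p_n]$ is an arithmetically progressed permutation with ratio $k$, with $P\neq[n,n-1,\ldots,1]$ and $p_1\neq k+1$. Then $\mathsf{T}$ is a balanced word.
   Context: Lexicographic order with a proper prefix smaller than the longer string; suffix array: permutation of $[1..n]$ such that $\mathsf{T}[\mathsf{SA}_{\mathsf{T}}[i]..n]$ is the $i$-th smallest suffix. $x\bmod n$: representative in $[1..n]$. An arithmetically progressed permutation of length $n$ with ratio $k\in[1..n-1]$ is a permutation $P$ of $[1..n]$ with $P[i+1]=P[i]+k\bmod n$. A binary string $\mathsf{T}$ is balanced if for every character $c\in\{\mathtt{a},\mathtt{b}\}$ and all pairs of equal-length factors $\mathsf{U},\mathsf{V}$ of the infinite periodic string $\mathsf{T}\mathsf{T}\mathsf{T}\cdots$, the numbers of occurrences of $c$ in $\mathsf{U}$ and in $\mathsf{V}$ differ by at most one. *)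

(* Defs.v *)
(* Strings over {a,b} are [seq bool] with a = false, b = true
   (so the letter order a < b is false < true). Positions are 1-indexed. *)
From mathcomp Require Import all_boot.
Set Implicit Arguments. Unset Strict Implicit. Unset Printing Implicit Defensive.

Fixpoint lexlt (s t : seq bool) : bool :=
  match s, t with
  | [::], [::] => false
  | [::], _ :: _ => true
  | _ :: _, [::] => false
  | x :: s', y :: t' => (~~ x && y) || ((x == y) && lexlt s' t')
  end.

Definition suffix (T : seq bool) (i : nat) : seq bool := drop i.-1 T.

Definition is_suffix_array (T : seq bool) (P : seq nat) : Prop :=
  perm_eq P (iota 1 (size T)) /\
  pairwise (fun p q => lexlt (suffix T p) (suffix T q)) P.

(* x mod n with representative in [1..n]. *)
Definition modn1 (x n : nat) : nat := ((x + n - 1) %% n).+1.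

Definition is_AP_perm (n k : nat) (P : seq nat) : Prop :=
  perm_eq P (iota 1 n) /\ 1 <= k <= n - 1 /\
  forall i, i.+1 < n -> nth 0 P i.+1 = modn1 (nth 0 P i + k) n.

(* Factor of length m starting at (0-indexed) position i of TTT... *)
Definition inf_factor (T : seq bool) (i m : nat) : seq bool :=
  mkseq (fun j => nth false T ((i + j) %% size T)) m.

Definition balanced (T : seq bool) : Prop :=
  forall (c : bool) (i j m : nat),
    count_mem c (inf_factor T i m) <= (count_mem c (inf_factor T j m)).+1.

(* Main.v *)
Require Import Defs.
From mathcomp Require Import all_boot.
From mathcomp Require Import zify.

Lemma lexlt_irr s : lexlt s s = false.
Proof. by elim: s => [|x s IH] //=; rewrite eqxx IH andNb andbF. Qed.

Lemma lexlt_asym s t : lexlt s t -> lexlt t s = false.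
Proof.
elim: s t => [|x s IH] [|y t] //=.
case: x; case: y => //=; by move/IH.
Qed.

Lemma lexlt_head x y s t : lexlt (x :: s) (y :: t) -> x <= y.
Proof. by case: x; case: y. Qed.

Lemma lexlt_cons x s t : lexlt (x :: s) (x :: t) = lexlt s t.
Proof. by case: x. Qed.

Lemma modn_wrap x n : n <= x < n + n -> x %% n = x - n.
Proof.
move=> /andP[H1 H2]. rewrite -{1}(subnK H1) modnDr modn_small //. lia.
Qed.

Lemma div_step u d n : 0 < n -> d < n -> (u + d) %/ n = u %/ n + (n - d <= u %% n).
Proof.
move=> n0 dn. rewrite {1}(divn_eq u n) -addnA divnMDl //. congr addn.
have := ltn_mod u n. rewrite n0 => Hu.
case: leqP => H.
- have E : u %% n + d = n + (u %% n + d - n) by lia.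
  by rewrite E -{1}(mul1n n) divnMDl // divn_small //; lia.
- rewrite divn_small; lia.
Qed.

Lemma count_bool (s : seq bool) : count_mem false s + count_mem true s = size s.
Proof. elim: s => [|[] s IH] //=; by rewrite -IH ?add0n ?add1n ?addnS ?addSn. Qed.

Theorem mainTheorem15 (n k : nat) (T : seq bool) (P : seq nat) :
  2 <= n -> size T = n ->
  is_suffix_array T P -> is_AP_perm n k P ->
  P <> rev (iota 1 n) -> nth 0 P 0 <> k.+1 ->
  balanced T.
Proof.
rewrite /is_suffix_array /is_AP_perm.
move=> n2 sT [permP sortP] [_ [kk APk]] notrev notk1.
move/andP: kk => [k1 kn]. rewrite sT in permP.
have sP : size P = n by rewrite (perm_size permP) size_iota.
have uP : uniq P by rewrite (perm_uniq permP) iota_uniq.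
have memP : P =i iota 1 n by exact: perm_mem.
have n0 : 0 < n by lia.
have P0 : 1 <= nth 0 P 0 <= n.
  have : nth 0 P 0 \in iota 1 n by rewrite -memP mem_nth // sP.
  rewrite mem_iota; lia.
set p0 := (nth 0 P 0).-1.
pose f i := (p0 + i * k) %% n.
have fn i : f i < n by rewrite ltn_mod.
have Pf i : i < n -> nth 0 P i = (f i).+1.
  elim: i => [|i IH] Hi.
    rewrite /f mul0n addn0 modn_small /p0; lia.
  rewrite APk; last lia.
  rewrite IH; last lia.
  rewrite /modn1; congr S.
  have -> : (f i).+1 + k + n - 1 = f i + k + n by lia.
  by rewrite modnDr /f modnDml mulSn [k + _]addnC addnA.
have finj i j : i < n -> j < n -> f i = f j -> i = j.
  move=> Hi Hj E. apply/eqP. by rewrite -(nth_uniq 0 _ _ uP) ?sP // !Pf // E.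
pose g q := index q.+1 P.
have gn q : q < n -> g q < n.
  by move=> Hq; rewrite /g -sP index_mem memP mem_iota; lia.
have fg q : q < n -> f (g q) = q.
  move=> Hq. have := Pf (g q) (gn q Hq). rewrite nth_index ?memP ?mem_iota; last lia.
  by case.
pose d := g ((p0 + 1) %% n).
have dn : d < n by rewrite gn // ltn_mod.
have fd : f d = (p0 + 1) %% n by rewrite fg // ltn_mod.
have dk : d * k = 1 %[mod n].
  apply/eqP; rewrite -(eqn_modDl p0); apply/eqP. exact: fd.
have p0n : p0 < n by rewrite /p0; lia.
have d0 : 0 < d.
  rewrite lt0n; apply/negP => /eqP D. move: fd. rewrite /f D mul0n addn0 (modn_small p0n).
  case: (ltnP (p0 + 1) n) => H.
    rewrite modn_small //; lia.
  have -> : p0 + 1 = n by lia.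
  rewrite modnn => p00. lia.
have frec i : f ((i + d) %% n) = (f i + 1) %% n.
  rewrite /f modnDml -modnDmr modnMml modnDmr mulnDl addnA.
  by rewrite -modnDmr dk modnDmr.
have sortn i j : i < j -> j < n -> lexlt (drop (f i) T) (drop (f j) T).
  move=> ij jn.
  move/(pairwiseP 0): (sortP) => /(_ i j). rewrite !inE sP.
  have iN : i < n by lia.
  move=> /(_ iN jn ij). by rewrite /Defs.suffix !Pf.
have ord a b : a < n -> b < n -> lexlt (drop (f a) T) (drop (f b) T) -> a < b.
  move=> Ha Hb L. case: (ltngtP a b) => // H.
    have L2 := sortn b a H Ha. by rewrite (lexlt_asym _ _ L) in L2.
  by rewrite H lexlt_irr in L.
pose t i := nth false T (f i).
have dropf i : drop (f i) T = t i :: drop (f i).+1 T by rewrite (drop_nth false) // sT.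
have mono i j : i <= j -> j < n -> t i <= t j.
  rewrite leq_eqVlt => /orP[/eqP -> //|ij] jn.
  have := sortn i j ij jn. rewrite !dropf. exact: lexlt_head.
have compat i j : i < j -> j < n -> f i <> n.-1 -> f j <> n.-1 -> t i = t j ->
    (i + d) %% n < (j + d) %% n.
  move=> ij jn fi fj tij.
  have fi' := fn i. have fj' := fn j.
  apply: ord; try by rewrite ltn_mod.
  rewrite !frec !(modn_small (_ : _ + 1 < n)); try lia.
  rewrite !addn1. have := sortn i j ij jn. by rewrite !dropf tij lexlt_cons.
pose r := g n.-1.
have rn : r < n by apply: gn; lia.
have fr : f r = n.-1 by apply: fg; lia.
have pref i : i < n -> f i <> n.-1 -> t i = t r -> r < i.
  move=> Hi fi tir. apply: ord => //.
  have fi' := fn i.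
  rewrite fr (drop_nth false) ?sT; last lia.
  rewrite drop_oversize ?sT; last lia.
  rewrite dropf (drop_nth false) ?sT; last lia.
  by rewrite tir /t fr lexlt_cons.
have excl : f n.-1 <> 0.
  move=> E.
  have : (p0 + n.-1 * k + k) %% n = k %% n by rewrite -modnDml /f in E *; rewrite E.
  rewrite -addnA -mulSnr prednK // (mulnC n) addnC modnMDl (modn_small p0n) modn_small; last lia.
  move=> pk; apply: notk1. rewrite -pk /p0; lia.
have revc : d = n.-1 -> r = 0 -> False.
  move=> dE r0.
  have frev i : i < n -> f i = n.-1 - i.
    elim: i => [|i IH] Hi; first by move: fr; rewrite r0 subn0.
    have := frec i.+1. rewrite dE modn_wrap; last lia.
    have -> : i.+1 + n.-1 - n = i by lia.
    rewrite IH; last lia.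
    have := fn i.+1.
    case: (ltnP (f i.+1 + 1) n) => H1 H2.
      rewrite modn_small //; lia.
    have -> : f i.+1 + 1 = n by lia.
    rewrite modnn; lia.
  apply: notrev. apply: (@eq_from_nth _ 0); first by rewrite sP size_rev size_iota.
  move=> i; rewrite sP => Hi.
  rewrite Pf // nth_rev ?size_iota // nth_iota; last lia.
  rewrite frev //; lia.
have fne i : i < n -> i <> r -> f i <> n.-1.
  move=> Hi ir E; apply: ir; apply: finj => //; by rewrite E fr.
have key : forall i, i < n -> t i = (n - d <= i).
  clear -mono compat pref fne frec fr excl revc fn dn d0 rn n2 n0.
  case tr: (t r).
  - have tle i : i < n -> t i = (r <= i).
      move=> Hi. case: (leqP r i) => H.
        by move: (mono r i H Hi); rewrite tr; case: (t i).
      apply/negbTE/negP => ti.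
      have := pref i Hi (fne i Hi ltac:(lia)) ltac:(by rewrite tr ti). lia.
    have hb i : i < n -> r < i -> n - d <= i.
      move=> Hi ri. rewrite leqNgt; apply/negP => Hlt.
      have ti : t i = true by rewrite tle // ltnW.
      have tn : t n.-1 = true by rewrite tle; lia.
      have C := compat i n.-1 ltac:(lia) ltac:(lia) (fne i Hi ltac:(lia))
        (fne n.-1 ltac:(lia) ltac:(lia)) ltac:(by rewrite ti tn).
      move: C; rewrite modn_small; last lia.
      rewrite modn_wrap; lia.
    have ha : r <= n - d.
      rewrite leqNgt; apply/negP => H.
      have h1 : (r <= 0) = false by apply/negbTE; rewrite -ltnNge; lia.
      have h2 : (r <= n - d) = false by apply/negbTE; rewrite -ltnNge; lia.
      have C := compat 0 (n - d) ltac:(lia) ltac:(lia) (fne 0 n0 ltac:(lia))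
        (fne (n - d) ltac:(lia) ltac:(lia)) ltac:(by rewrite !tle ?h1 ?h2 //; lia).
      move: C; rewrite add0n (modn_small dn) subnK; last lia.
      by rewrite modnn.
    have rE : r = n - d.
      case: (ltnP r (n - d)) => H; last lia.
      exfalso. have r1 := hb r.+1 ltac:(lia) (ltnSn r).
      have E : r + d = n.-1 by lia.
      apply: excl. have := frec r. rewrite fr E (modn_small (_ : n.-1 < n)); last lia.
      by rewrite addn1 prednK // modnn.
    by move=> i Hi; rewrite tle // rE.
  - have r0 : r = 0.
      case: (posnP r) => // rp. exfalso.
      have t0 : t 0 = t r.
        by move: (mono 0 r (leq0n _) rn); rewrite tr; case: (t 0).
      have := pref 0 n0 (fne 0 n0 ltac:(lia)) t0. lia.
    have hb i : i < n -> t i -> n - d <= i.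
      move=> Hi ti. rewrite leqNgt; apply/negP => Hlt.
      have i0 : i <> 0 by move=> E; move: ti; rewrite E -r0 tr.
      have tn : t n.-1 = true.
        have Hm : t i <= t n.-1 by apply: mono; lia.
        by move: Hm; rewrite ti; case: (t n.-1).
      have C := compat i n.-1 ltac:(lia) ltac:(lia) (fne i Hi ltac:(lia))
        (fne n.-1 ltac:(lia) ltac:(lia)) ltac:(by rewrite ti tn).
      move: C; rewrite modn_small; last lia.
      rewrite modn_wrap; lia.
    have ha i : i < n -> ~~ t i -> i < n - d.
      move=> Hi ti. rewrite ltnNge; apply/negP => H.
      case: (ltnP d n.-1) => dH; last by apply: revc => //; lia.
      have t1 : t 1 = false.
        have Hm : t 1 <= t i by apply: mono; lia.
        by move: Hm ti; case: (t 1); case: (t i).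
      have C := compat 1 i ltac:(lia) Hi (fne 1 ltac:(lia) ltac:(lia))
        (fne i Hi ltac:(lia)) ltac:(by rewrite t1; apply/esym/negbTE).
      move: C; rewrite modn_small; last lia.
      rewrite modn_wrap; lia.
    move=> i Hi. case E: (t i).
      by rewrite (hb i Hi) ?E.
    by apply/esym/negbTE; rewrite -ltnNge ha // E.
have Tq q : q < n -> nth false T q = (n - d <= g q).
  by move=> Hq; rewrite -key ?gn // /t fg.
have grec q : q < n -> g ((q + 1) %% n) = (g q + d) %% n.
  move=> Hq. apply: finj; [apply: gn; by rewrite ltn_mod | by rewrite ltn_mod | ].
  by rewrite fg ?ltn_mod // frec fg.
have cnt i m : count_mem true (inf_factor T i m) = (g (i %% n) + m * d) %/ n
    /\ g ((i + m) %% n) = (g (i %% n) + m * d) %% n.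
  have gi : g (i %% n) < n by apply: gn; rewrite ltn_mod.
  elim: m => [|m [IH1 IH2]].
    rewrite mul0n !addn0 (modn_small gi); split => //.
    by rewrite divn_small.
  split.
    rewrite /inf_factor mkseqS -cats1 count_cat -/(inf_factor T i m) IH1 /= sT Tq ?ltn_mod //.
    rewrite IH2 mulSn (addnC d) (addnA (g (i %% n))) (div_step _ d n n0 dn).
    by rewrite eqb_id addn0.
  have -> : i + m.+1 = (i + m) + 1 by lia.
  rewrite -modnDml grec ?ltn_mod // IH2 modnDml mulSn (addnC d) addnA.
  done.
move=> c i j m.
have [Bi _] := cnt i m. have [Bj _] := cnt j m.
have gi : g (i %% n) < n by apply: gn; rewrite ltn_mod.
have gj : g (j %% n) < n by apply: gn; rewrite ltn_mod.
have hi := count_bool (inf_factor T i m).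
have hj := count_bool (inf_factor T j m).
rewrite /inf_factor size_mkseq -/(inf_factor T i m) in hi.
rewrite /inf_factor size_mkseq -/(inf_factor T j m) in hj.
have up x y : x < n -> (x + m * d) %/ n <= (y + m * d) %/ n + 1.
  move=> xn. apply: leq_trans (leq_div2r n (_ : x + m * d <= (y + m * d) + n)) _.
    lia.
  have -> : y + m * d + n = 1 * n + (y + m * d) by lia.
  by rewrite divnMDl // addnC.
have L1 := up _ (g (j %% n)) gi. have L2 := up _ (g (i %% n)) gj.
rewrite -Bi -Bj in L1 L2.
move: hi hj L1 L2.
set ai := count_mem false (inf_factor T i m).
set bi := count_mem true (inf_factor T i m).
set aj := count_mem false (inf_factor T j m).
set bj := count_mem true (inf_factor T j m).
case: c; rewrite -/ai -/bi -/aj -/bj; lia.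
Qed.
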